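(* Let $n\ge 2$ be an integer, $C\ge 4$ a constant, $Z$ a finite set with $|Z|\ge 2$, and $T_1,T_2$ rooted $Z$-trees with $\mathrm{Seq}(T_1)=\mathrm{Seq}(T_2)$. Then at least one of the following holds: (1) there is a pair $(x,Y)$ with $x\in Z$, $\emptyset\neq Y\subset Z$, $\mathrm{lca}_{T_1}(Y)\prec\mathrm{lca}_{T_1}(Y\cup\{x\})$, $\mathrm{lca}_{T_2}(Y)\prec\mathrm{lca}_{T_2}(Y\cup\{x\})$ and $|Y|\ge |Z|/C$; (2) there is a good pair $(x,Y)$ (with respect to $n$, $T_1$, $T_2$); (3) there is a set $A\subseteq Z$ with $|A|\ge \log n$ such that the unrooted trees obtained from $T_1|A$ and $T_2|A$ by suppressing the root are identical caterpillars.
   Context: A rooted $Z$-tree is a binary rooted tree with a root of degree two, all other internal nodes of degree three, leaves bijectively labeled by $Z$, and each internal node having a designated left child and right child. $x\preceq y$ means $x$ is a descendant of $y$ ($x\prec y$ if also $x\ne y$); $\mathrm{lca}_T(W)$ is the lowest node having all elements of $W$ as descendants. For $A\subseteq Z$, $T|A$ is the rooted tree obtained from the minimal subtree spanning $A$, rooted at $\mathrm{lca}_T(A)$, by suppressing non-root degree-two nodes. $\mathrm{Seq}(T)$ is the left-to-right leaf ordering given by pre-order traversal (left child before right child). A good pair (with respect to $n$, $T_1$, $T_2$) is a pair $(x,Y)$ with $x\in Z$, $\emptyset\ne Y\subset Z$, $\mathrm{lca}_{T_1}(Y)\prec\mathrm{lca}_{T_1}(Y\cup\{x\})$, $\mathrm{lca}_{T_2}(Y)\prec\mathrm{lca}_{T_2}(Y\cup\{x\})$,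 and $|Y|\ge|Z|/(2\log n)$. A tree is a caterpillar if every internal node is adjacent to at least one leaf; unrooted trees are identical if there is a label-preserving graph isomorphism. $\log=\log_2$. *)

(* Defs.v *)
From Stdlib Require Import Reals.
From mathcomp Require Import all_boot.

Set Implicit Arguments.
Unset Strict Implicit.
Unset Printing Implicit Defensive.

Inductive btree (Z : Type) : Type :=
| Leaf : Z -> btree Z
| Node : btree Z -> btree Z -> btree Z.
Arguments Leaf {Z}.
Arguments Node {Z}.

Section Trees.
Variable Z : finType.

(* Seq(T): leaf labels in pre-order, left child before right child. *)
Fixpoint leaves (t : btree Z) : seq Z :=
  match t with Leaf a => [:: a] | Node l r => leaves l ++ leaves r end.

(* A rooted Z-tree: leaves bijectively labelled by Z. (The root of a [Node]
   has degree two, every other internal node degree three.) *)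
Definition ZTree (t : btree Z) : Prop := perm_eq (leaves t) (enum Z).

Definition leafset (t : btree Z) : {set Z} := [set x in leaves t].

(* Nodes are addressed by paths from the root (false = left, true = right). *)
Fixpoint sub_at (t : btree Z) (p : seq bool) : option (btree Z) :=
  match p with
  | [::] => Some t
  | b :: p' => match t with
               | Leaf _ => None
               | Node l r => sub_at (if b then r else l) p'
               end
  end.

Definition is_node (t : btree Z) (p : seq bool) : bool := isSome (sub_at t p).

Definition leaf_label (t : btree Z) (p : seq bool) : option Z :=
  match sub_at t p with Some (Leaf a) => Some a | _ => None end.

(* u is a strict descendant of v (u ≺ v). *)
Definition prec (u v : seq bool) : bool := prefix v u && (u != v).

(* lca_T(W): the lowest node having all of W as descendants (W nonempty). *)
Fixpoint lca (t : btree Z) (W : {set Z}) : seq bool :=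
  match t with
  | Leaf _ => [::]
  | Node l r =>
      if W \subset leafset l then false :: lca l W
      else if W \subset leafset r then true :: lca r W
      else [::]
  end.

(* T|A: minimal subtree spanning A, rooted at lca(A), degree-two nodes suppressed. *)
Fixpoint restrict (A : {set Z}) (t : btree Z) : option (btree Z) :=
  match t with
  | Leaf a => if a \in A then Some (Leaf a) else None
  | Node l r =>
      match restrict A l, restrict A r with
      | Some l', Some r' => Some (Node l' r')
      | Some l', None => Some l'
      | None, Some r' => Some r'
      | None, None => None
      end
  end.

(* Unrooted tree obtained by suppressing the root: vertices are the non-root
   nodes (or the single leaf if the tree is a leaf); edges are parent-child
   edges not incident to the root, plus an edge joining the two root children. *)
Definition uvert (t : btree Z) (p : seq bool) : bool :=
  is_node t p && (if t is Node _ _ then p != [::] else true).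

Definition parent (u v : seq bool) : bool :=
  prefix u v && (size v == (size u).+1).

Definition uadj (t : btree Z) (u v : seq bool) : bool :=
  [&& uvert t u, uvert t v &
      [|| parent u v, parent v u,
          (u == [:: false]) && (v == [:: true]) |
          (u == [:: true]) && (v == [:: false])]].

(* Identical unrooted trees: label-preserving graph isomorphism. *)
Definition identical (t1 t2 : btree Z) : Prop :=
  exists f : seq bool -> seq bool,
    [/\ (forall u, uvert t1 u -> uvert t2 (f u)),
        {in uvert t1 &, injective f},
        (forall v, uvert t2 v -> exists2 u, uvert t1 u & f u = v),
        (forall u v, uvert t1 u -> uvert t1 v -> uadj t2 (f u) (f v) = uadj t1 u v) &
        (forall u, uvert t1 u -> leaf_label t2 (f u) = leaf_label t1 u)].

(* Caterpillar: every internal (unlabelled) vertex is adjacent to a leaf. *)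
Definition caterpillar (t : btree Z) : Prop :=
  forall v, uvert t v -> leaf_label t v = None ->
    exists u, uadj t v u && (leaf_label t u != None).

(* The pair condition shared by (1) and good pairs (without size bound). *)
Definition pair_cond (t1 t2 : btree Z) (x : Z) (Y : {set Z}) : bool :=
  [&& Y != set0, Y \proper [set: Z],
      prec (lca t1 Y) (lca t1 (x |: Y)) &
      prec (lca t2 Y) (lca t2 (x |: Y))].

End Trees.

Local Open Scope R_scope.
Definition log2 (x : R) : R := ln x / ln 2.

Definition good_pair (Z : finType) (n : nat) (t1 t2 : btree Z) (x : Z) (Y : {set Z}) : Prop :=
  pair_cond t1 t2 x Y /\
  Rge (INR #|Y|) (INR #|Z| / (2 * log2 (INR n))).

(* Main.v *)
Require Import Defs.
From Stdlib Require Import Reals Lra.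
From mathcomp Require Import all_boot.
From mathcomp Require Import zify.
Set Implicit Arguments. Unset Strict Implicit. Unset Printing Implicit Defensive.

Section Combs.
Variable Z : finType.
Implicit Types X Y W t : btree Z.

Definition rotf (u : seq bool) : seq bool := match u with
 | [:: false] => [:: true]
 | false :: false :: p => false :: p
 | false :: true :: p => true :: false :: p
 | true :: p => true :: true :: p
 | [::] => [::] end.

Definition rotg (u : seq bool) : seq bool := match u with
 | [:: true] => [:: false]
 | false :: p => false :: false :: p
 | true :: false :: p => false :: true :: p
 | true :: true :: p => true :: p
 | [::] => [::] end.

Definition adjR (u v : seq bool) : bool :=
  [|| parent u v, parent v u,
          (u == [:: false]) && (v == [:: true]) |
          (u == [:: true]) && (v == [:: false])].

Lemma uadjE t u v : uadj t u v = [&& uvert t u, uvert t v & adjR u v].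
Proof. by []. Qed.

Lemma adjR_rot u v : u != [::] -> v != [::] -> adjR (rotf u) (rotf v) = adjR u v.
Proof.
case: u => [|[] [|[] p]] // _; case: v => [|[] [|[] q]] // _;
 rewrite /adjR /parent /= ?eqseq_cons /= ?andbF ?orbF //; (try by case: p); (try by case: q).
Qed.

Lemma rot_id X Y W : identical (Node (Node X Y) W) (Node X (Node Y W)).
Proof.
have Hv : forall u, uvert (Node (Node X Y) W) u -> uvert (Node X (Node Y W)) (rotf u).
  by case=> [|[] [|[] p]].
exists rotf; split => //.
- case=> [|[] [|[] p]] // [|[] [|[] q]] //= _ _ H; congruence.
- move=> v H; exists (rotg v); move: H; by case: v => [|[] [|[] p]].
- move=> u v Hu Hv'; rewrite !uadjE Hu Hv' !Hv //= adjR_rot //.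
  + by case/andP: Hu.
  + by case/andP: Hv'.
- by case=> [|[] [|[] p]].
Qed.

Lemma rotfgK u : u != [::] -> rotf (rotg u) = u.
Proof. by case: u => [|[] [|[] p]]. Qed.

Lemma rotg_nil u : u != [::] -> rotg u != [::].
Proof. by case: u => [|[] [|[] p]]. Qed.

Lemma adjR_rotg u v : u != [::] -> v != [::] -> adjR (rotg u) (rotg v) = adjR u v.
Proof.
move=> Hu Hv; rewrite -{2}(rotfgK Hu) -{2}(rotfgK Hv) adjR_rot //; exact: rotg_nil.
Qed.

Lemma rot_inv X Y W : identical (Node X (Node Y W)) (Node (Node X Y) W).
Proof.
have Hv : forall u, uvert (Node X (Node Y W)) u -> uvert (Node (Node X Y) W) (rotg u).
  by case=> [|[] [|[] p]].
exists rotg; split => //.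
- case=> [|[] [|[] p]] // [|[] [|[] q]] //= _ _ H; congruence.
- move=> v H; exists (rotf v); move: H; by case: v => [|[] [|[] p]].
- move=> u v Hu Hv'; rewrite !uadjE Hu Hv' !Hv //= adjR_rotg //.
  + by case/andP: Hu.
  + by case/andP: Hv'.
- by case=> [|[] [|[] p]].
Qed.

Lemma identical_refl t : identical t t.
Proof.
exists id; split => //.
- by move=> v H; exists v.
Qed.

Lemma identical_trans t1 t2 t3 : identical t1 t2 -> identical t2 t3 -> identical t1 t3.
Proof.
case=> f [f1 f2 f3 f4 f5] [g [g1 g2 g3 g4 g5]].
exists (g \o f); split.
- by move=> u /f1 /g1.
- move=> u v Hu Hv /= /g2 E; apply: f2 => //; apply: E; exact: f1.
- move=> w /g3 [v Hv <-]; case: (f3 _ Hv) => u Hu <-; by exists u.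
- move=> u v Hu Hv /=; rewrite g4 ?f4 //; exact: f1.
- move=> u Hu /=; rewrite g5 ?f5 //; exact: f1.
Qed.

Lemma caterpillar_id t1 t2 : identical t1 t2 -> caterpillar t1 -> caterpillar t2.
Proof.
case=> f [f1 f2 f3 f4 f5] C v Hv Hl.
case: (f3 _ Hv) => u Hu E; subst v.
rewrite f5 // in Hl; case: (C _ Hu Hl) => w /andP [Hw Hlw].
have Hw' : uvert t1 w by move: Hw; rewrite uadjE => /and3P[].
exists (f w); rewrite f4 // Hw f5 //.
Qed.


Fixpoint rcomb (x : Z) (xs : seq Z) : btree Z :=
  match xs with [::] => Leaf x | y :: ys => Node (Leaf x) (rcomb y ys) end.
Fixpoint lcomb (acc : btree Z) (xs : seq Z) : btree Z :=
  match xs with [::] => acc | y :: ys => lcomb (Node acc (Leaf y)) ys end.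
Fixpoint rfold (xs : seq Z) (W : btree Z) : btree Z :=
  match xs with [::] => W | y :: ys => Node (Leaf y) (rfold ys W) end.

Lemma lcomb_rcons acc xs y : lcomb acc (rcons xs y) = Node (lcomb acc xs) (Leaf y).
Proof. by elim: xs acc => //= z zs IH acc; rewrite IH. Qed.

Lemma rfold_rcons xs y W : rfold (rcons xs y) W = rfold xs (Node (Leaf y) W).
Proof. by elim: xs => //= z zs ->. Qed.

Lemma rcomb_rcons x xs y : rcomb x (rcons xs y) = rfold (x :: xs) (Leaf y).
Proof. by elim: xs x => //= z zs IH x; rewrite IH. Qed.

Lemma chainC x xs W :
  identical (Node (lcomb (Leaf x) xs) W) (Node (Leaf x) (rfold xs W)).
Proof.
elim/last_ind: xs W => [|xs a IH] W; first exact: identical_refl.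
rewrite lcomb_rcons rfold_rcons; apply: identical_trans (rot_id _ _ _) _; exact: IH.
Qed.

Lemma chainC' x xs W :
  identical (Node (Leaf x) (rfold xs W)) (Node (lcomb (Leaf x) xs) W).
Proof.
elim/last_ind: xs W => [|xs a IH] W; first exact: identical_refl.
rewrite lcomb_rcons rfold_rcons; apply: identical_trans (IH _) _; exact: rot_inv.
Qed.

Lemma ident_lr x xs : identical (lcomb (Leaf x) xs) (rcomb x xs).
Proof.
case/lastP: xs => [|ys y]; first exact: identical_refl.
rewrite lcomb_rcons rcomb_rcons; exact: chainC.
Qed.

Lemma ident_rl x xs : identical (rcomb x xs) (lcomb (Leaf x) xs).
Proof.
case/lastP: xs => [|ys y]; first exact: identical_refl.
rewrite lcomb_rcons rcomb_rcons; exact: chainC'.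
Qed.

Lemma sub_at_leaf a p t : sub_at (Leaf a) p = Some t -> t = Leaf a.
Proof. by case: p => [[]|]. Qed.

Lemma rcomb_int x xs p l r : sub_at (rcomb x xs) p = Some (Node l r) -> exists a, l = Leaf a.
Proof.
elim: xs x p => [|y ys IH] x p /=; first by move/sub_at_leaf.
case: p => [[<-]|[] p /=]; [by exists x | exact: IH | by move/sub_at_leaf].
Qed.

Lemma sub_at_rcons t p l r : sub_at t p = Some (Node l r) -> sub_at t (rcons p false) = Some l.
Proof.
elim: p t => [|b p IH] [a|tl tr] //=.
- by case=> -> _; case: l.
- exact: IH.
Qed.

Lemma uvertI t w : is_node t w -> w != [::] -> uvert t w.
Proof. by rewrite /uvert => -> ->; case: t. Qed.

Lemma sub_at0 t : sub_at t [::] = Some t.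
Proof. by case: t. Qed.

Lemma rcomb_cat x xs : caterpillar (rcomb x xs).
Proof.
move=> v Hv; have /andP [Hn Hne] := Hv; rewrite /leaf_label.
move: Hn; rewrite /is_node; case E: (sub_at (rcomb x xs) v) => [[a|l r]|] //= _ _.
case: (rcomb_int E) => a El; subst l.
have Hw : uvert (rcomb x xs) (rcons v false).
  apply: uvertI; last by rewrite -size_eq0 size_rcons.
  by rewrite /is_node (sub_at_rcons E).
exists (rcons v false); rewrite (sub_at_rcons E) andbT uadjE Hv Hw /=.
by rewrite /adjR /parent prefix_rcons size_rcons eqxx.
Qed.

End Combs.


Section Trees2.
Variable Z : finType.
Implicit Types t u l r : btree Z.
Implicit Types W : {set Z}.

Fixpoint rgood (A : {set Z}) t := match t with
  | Leaf _ => true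
  | Node l r => [&& rgood A l, rgood A r &
                  has (mem A) (leaves r) ==> (count (mem A) (leaves l) <= 1)] end.
Fixpoint lgood (A : {set Z}) t := match t with
  | Leaf _ => true
  | Node l r => [&& lgood A l, lgood A r &
                  has (mem A) (leaves l) ==> (count (mem A) (leaves r) <= 1)] end.

Lemma restrict_r A t : rgood A t ->
  restrict A t = match [seq z <- leaves t | z \in A] with
                 [::] => None | x :: xs => Some (rcomb x xs) end.
Proof.
elim: t => [a|l IHl r IHr] /=; first by case: (a \in A).
case/and3P=> /IHl -> /IHr ->; rewrite filter_cat has_filter -size_filter.
case: [seq z <- leaves r | z \in A] => [|y ys] /=; first by rewrite cats0; case: filter.
by case: [seq z <- leaves l | z \in A] => [|a [|b bs]].
Qed.

Lemma restrict_l A t : lgood A t ->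
  restrict A t = match [seq z <- leaves t | z \in A] with
                 [::] => None | x :: xs => Some (lcomb (Leaf x) xs) end.
Proof.
elim: t => [a|l IHl r IHr] /=; first by case: (a \in A).
case/and3P=> /IHl -> /IHr ->; rewrite filter_cat has_filter -size_filter.
case: [seq z <- leaves l | z \in A] => [|x xs] /=; first by case: filter.
case: [seq z <- leaves r | z \in A] => [|y [|b bs]] //=; first by rewrite cats0.
by rewrite cats1 lcomb_rcons.
Qed.

Lemma sub_at_cat t p u q : sub_at t p = Some u -> sub_at t (p ++ q) = sub_at u q.
Proof.
elim: p t => [|b p IH] [a|tl tr] //=; [by case=> <- | by case=> <- | exact: IH].
Qed.

Lemma sub_leaves t p u : sub_at t p = Some u ->
  exists pre suf, leaves t = pre ++ leaves u ++ suf.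
Proof.
elim: t p => [a|l IHl r IHr] [|[] p] //=.
- by case=> <-; exists [::], [::].
- by case=> <-; exists [::], [::]; rewrite cats0.
- case/IHr => pre [suf ->]; exists (leaves l ++ pre), suf; by rewrite catA.
- case/IHl => pre [suf ->]; exists pre, (suf ++ leaves r); by rewrite !catA.
Qed.

Lemma sub_subset t p u : sub_at t p = Some u -> {subset leaves u <= leaves t}.
Proof. by case/sub_leaves=> pre [suf ->] z Hz; rewrite !mem_cat Hz orbT. Qed.

Lemma leaves_nil t : leaves t != [::].
Proof. by elim: t => //= l IHl r _; case: (leaves l) IHl. Qed.

Lemma leaf_path t z : z \in leaves t -> exists p, sub_at t p = Some (Leaf z).
Proof.
elim: t => [a|l IHl r IHr] /=.
- by rewrite inE => /eqP->; exists [::].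
- rewrite mem_cat => /orP[/IHl [p Hp]|/IHr [p Hp]]; [exists (false :: p)|exists (true :: p)]; by [].
Qed.

Lemma sub_at_rconsb t p l r b : sub_at t p = Some (Node l r) ->
  sub_at t (rcons p b) = Some (if b then r else l).
Proof. by move=> H; rewrite -cats1 (sub_at_cat _ H) /=; case: b; rewrite sub_at0. Qed.

Lemma lca_sub t W : W \subset leafset t ->
  exists u, sub_at t (lca t W) = Some u /\ W \subset leafset u.
Proof.
elim: t => [a|l IHl r IHr] /=; first by move=> H; exists (Leaf a).
case: ifP => [H _|_]; first by case: (IHl H) => u [Hu Hs]; exists u.
case: ifP => [H _|_ H]; first by case: (IHr H) => u [Hu Hs]; exists u.
by exists (Node l r).
Qed.

Lemma leafsetE t : leafset t = [set x in leaves t].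
Proof. by []. Qed.

Lemma lca_below t p u W : uniq (leaves t) -> sub_at t p = Some u ->
  W \subset leafset u -> W != set0 -> prefix p (lca t W).
Proof.
elim: t p => [a|l IHl r IHr] p; first by case: p.
case: p => [|b p]; first by rewrite prefix0s.
move=> /= Hun; rewrite cat_uniq in Hun.
case/and3P: Hun => Hl Hd Hr.
case: b => Hs HW HW0.
- have HWr : W \subset leafset r.
    apply: subset_trans HW _; apply/subsetP => z; rewrite !inE; exact: (sub_subset Hs).
  have -> : (W \subset leafset l) = false.
    case: (set_0Vmem W) HW0 => [->|[y Hy]]; first by rewrite eqxx.
    move=> _; apply/negP => /subsetP Hl'.
    move: (Hl' _ Hy) ((subsetP HWr) _ Hy); rewrite !inE => H1 H2.
    by move/hasP: Hd; apply; exists y.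
  by rewrite HWr /=; exact: IHr Hs HW HW0.
- have HWl : W \subset leafset l.
    apply: subset_trans HW _; apply/subsetP => z; rewrite !inE; exact: (sub_subset Hs).
  by rewrite HWl /=; exact: IHl Hs HW HW0.
Qed.

Lemma disj l r z : uniq (leaves l ++ leaves r) -> z \in leaves l -> z \notin leaves r.
Proof.
rewrite cat_uniq => /and3P [_ Hd _] Hl; apply/negP => Hr.
by move/hasP: Hd; apply; exists z.
Qed.

Lemma leafset0 u : leafset u != set0.
Proof.
apply/set0Pn; case E: (leaves u) (leaves_nil u) => [|a s] //= _.
by exists a; rewrite inE E mem_head.
Qed.

Lemma G1 t p u x : uniq (leaves t) -> sub_at t p = Some u -> x \in leaves t ->
  x \notin leaves u -> prec (lca t (leafset u)) (lca t (x |: leafset u)).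
Proof.
move=> Hun Hs Hx Hxu.
have Yt : leafset u \subset leafset t.
  by apply/subsetP => z; rewrite !inE; exact: (sub_subset Hs).
have [ul [Hl Hsl]] := lca_sub Yt.
have Hp := lca_below Hun Hs (subxx _) (leafset0 u).
have XYt : x |: leafset u \subset leafset t by rewrite subUset sub1set inE Hx Yt.
have [um [Hm Hsm]] := lca_sub XYt.
have Hpm : prefix (lca t (x |: leafset u)) (lca t (leafset u)).
  apply: (lca_below Hun Hm _ (leafset0 u)).
  by apply: subset_trans Hsm; apply: subsetUr.
rewrite /prec Hpm /=; apply/eqP => E.
case/prefixP: Hp => sg Esg.
have Hul : sub_at u sg = Some ul by rewrite -(sub_at_cat _ Hs) -Esg.
have xum : x \in leafset um by move/subsetP: Hsm; apply; rewrite !inE eqxx.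
move: Hm; rewrite -E Hl => -[Eum]; subst um.
by move: xum; rewrite inE => /(sub_subset Hul); rewrite (negbTE Hxu).
Qed.

Lemma G2 l r (Y : {set Z}) x : uniq (leaves (Node l r)) -> Y \subset leafset l ->
  Y != set0 -> x \in leaves r -> prec (lca (Node l r) Y) (lca (Node l r) (x |: Y)).
Proof.
move=> /= Hun HY HY0 Hx.
have [y Hy] := set0Pn _ HY0.
have Hyl : y \in leaves l by move/subsetP: HY => /(_ _ Hy); rewrite inE.
rewrite /= HY.
have -> : (x |: Y \subset leafset l) = false.
  apply/negP; rewrite subUset sub1set inE => /andP [Hxl _].
  by move: (disj Hun Hxl); rewrite Hx.
have -> : (x |: Y \subset leafset r) = false.
  apply/negP; rewrite subUset => /andP [_ /subsetP /(_ _ Hy)]; rewrite inE => Hyr.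
  by move: (disj Hun Hyl); rewrite Hyr.
by [].
Qed.

Lemma G2' l r (Y : {set Z}) x : uniq (leaves (Node l r)) -> Y \subset leafset r ->
  Y != set0 -> x \in leaves l -> prec (lca (Node l r) Y) (lca (Node l r) (x |: Y)).
Proof.
move=> /= Hun HY HY0 Hx.
have [y Hy] := set0Pn _ HY0.
have Hyr : y \in leaves r by move/subsetP: HY => /(_ _ Hy); rewrite inE.
have -> /= : (Y \subset leafset l) = false.
  apply/negP => /subsetP /(_ _ Hy); rewrite inE => Hyl.
  by move: (disj Hun Hyl); rewrite Hyr.
rewrite HY.
have -> : (x |: Y \subset leafset l) = false.
  apply/negP; rewrite subUset => /andP [_ /subsetP /(_ _ Hy)]; rewrite inE => Hyl.
  by move: (disj Hun Hyl); rewrite Hyr.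
have -> : (x |: Y \subset leafset r) = false.
  apply/negP; rewrite subUset sub1set inE => /andP [Hxr _].
  by move: (disj Hun Hx); rewrite Hxr.
by [].
Qed.
End Trees2.


Lemma ar_pos (X M p b : nat) : X <= M -> M <= p - b -> b <= p -> b + X <= p.
Proof. lia. Qed.
Lemma ar_sep (d X Y b : nat) : d + X <= Y -> b + X + d <= b + Y.
Proof. lia. Qed.
Lemma ar_sz (P L ia ib d k : nat) : P <= ia < P + L -> P <= ib < P + L ->
  (ia + d <= ib) || (ib + d <= ia) -> k = d.+1 -> k <= L.
Proof. lia. Qed.
Lemma ar_r (p iz iw b0 : nat) : p <= iz -> iz < iw -> b0 <= iw <= p -> False.
Proof. lia. Qed.
Lemma ar_l (q iz iw b0 p : nat) : iz < q -> iw < iz -> b0 <= iw <= p -> b0.+1 = q -> False.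
Proof. lia. Qed.
Lemma ar_fin (N p q b0 d k M r : nat) : q < k -> N - p < k -> k = d.+1 -> b0.+1 = q ->
  p - b0 = M + r -> r < d -> b0 <= p -> p < N -> N < M + d + 2 * d.
Proof. lia. Qed.

Section Main.
Variable Z : finType.
Implicit Types t u l r : btree Z.

Lemma rgood_of (A : {set Z}) t :
  (forall p l r, sub_at t p = Some (Node l r) -> has (mem A) (leaves r) ->
     count (mem A) (leaves l) <= 1) -> rgood A t.
Proof.
elim: t => [a|l IHl r IHr] //= H.
rewrite IHl ?IHr /=.
- by apply/implyP; apply: (H [::]).
- by move=> p l' r' Hs; apply: (H (true :: p)).
- by move=> p l' r' Hs; apply: (H (false :: p)).
Qed.

Lemma lgood_of (A : {set Z}) t :
  (forall p l r, sub_at t p = Some (Node l r) -> has (mem A) (leaves l) ->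
     count (mem A) (leaves r) <= 1) -> lgood A t.
Proof.
elim: t => [a|l IHl r IHr] //= H.
rewrite IHl ?IHr /=.
- by apply/implyP; apply: (H [::]).
- by move=> p l' r' Hs; apply: (H (true :: p)).
- by move=> p l' r' Hs; apply: (H (false :: p)).
Qed.

Lemma pos_mid (pre m suf : seq Z) z : uniq (pre ++ m ++ suf) -> z \in m ->
  size pre <= index z (pre ++ m ++ suf) < size pre + size m.
Proof.
move=> Hu Hz.
have Hzp : z \notin pre.
  apply/negP => Hp; move: Hu; rewrite cat_uniq => /and3P [_ /hasP Hd _].
  by apply: Hd; exists z => //; rewrite mem_cat Hz.
by rewrite index_cat (negbTE Hzp) index_cat Hz leq_addr ltn_add2l index_mem.
Qed.

Lemma before (pre m1 m2 suf : seq Z) z w : uniq (pre ++ (m1 ++ m2) ++ suf) ->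
  z \in m1 -> w \in m2 -> index z (pre ++ (m1 ++ m2) ++ suf) < index w (pre ++ (m1 ++ m2) ++ suf).
Proof.
move=> Hu Hz Hw.
have Hu1 : uniq (pre ++ m1 ++ (m2 ++ suf)) by rewrite -catA in Hu.
have Hu2 : uniq ((pre ++ m1) ++ m2 ++ suf) by rewrite -catA -catA in Hu *.
have /andP [_ H1] := pos_mid Hu1 Hz.
have /andP [H2 _] := pos_mid Hu2 Hw.
move: H1 H2; rewrite -!catA size_cat => A B.
exact: leq_trans A B.
Qed.

Lemma two (P : pred Z) (m : seq Z) : uniq m -> 1 < count P m ->
  exists a b, [/\ a != b, a \in m, b \in m, P a & P b].
Proof.
move=> Hu; rewrite -size_filter.
have := filter_uniq P Hu.
case E: (filter P m) => [|a [|b rest]] //= /andP [Hab _] _.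
have Ha : a \in filter P m by rewrite E mem_head.
have Hb : b \in filter P m by rewrite E !inE eqxx orbT.
rewrite mem_filter in Ha; rewrite mem_filter in Hb.
case/andP: Ha => Pa ma; case/andP: Hb => Pb mb.
exists a, b; split => //; apply/negP => /eqP Eab; subst b.
by move: Hab; rewrite inE eqxx.
Qed.

Lemma uniq_sub t p u : uniq (leaves t) -> sub_at t p = Some u -> uniq (leaves u).
Proof.
move=> Hu /sub_leaves [pre [suf E]]; move: Hu; rewrite E cat_uniq => /and3P [_ _].
by rewrite cat_uniq => /andP [].
Qed.

Lemma card_leafset u : uniq (leaves u) -> #|leafset u| = size (leaves u).
Proof. by move=> Hu; rewrite /leafset cardsE; apply/card_uniqP. Qed.


Lemma oriented (T1 T2 : btree Z) (k : nat) L1 R1 L2 R2 :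
  1 < k -> uniq (leaves T1) -> leaves T1 = leaves T2 ->
  (forall x Y, pair_cond T1 T2 x Y -> #|Y| < k) ->
  T1 = Node L1 R1 -> T2 = Node L2 R2 -> size (leaves L1) <= size (leaves L2) ->
  exists (A : {set Z}) x xs, size (leaves T1) < (#|A| + 2) * k.-1 /\
    restrict A T1 = Some (rcomb x xs) /\ restrict A T2 = Some (lcomb (Leaf x) xs).
Proof.
move=> Hk Hun Es NP E1 E2 Hqp.
have [x0 _] : exists x0 : Z, true.
  by case: (leaves L1) (leaves_nil L1) => // a _; exists a.
set s := leaves T1.
have sE1 : s = leaves L1 ++ leaves R1 by rewrite /s E1.
have sE2 : s = leaves L2 ++ leaves R2 by rewrite /s Es E2.
have Hun2 : uniq (leaves T2) by rewrite -Es.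
set q := size (leaves L1); set p := size (leaves L2); set N := size s.
have q0 : 0 < q by rewrite lt0n size_eq0 leaves_nil.
have pN : p < N by rewrite /N sE2 size_cat -{1}[p]addn0 ltn_add2l lt0n size_eq0 leaves_nil.
have inL1 : forall z, z \in s -> (z \in leaves L1) = (index z s < q).
  move=> z; rewrite {1 2}sE1 index_cat mem_cat; case: ifP => [H _|_ /= H].
  - by rewrite index_mem.
  - by rewrite ltnNge leq_addr.
have inL2 : forall z, z \in s -> (z \in leaves L2) = (index z s < p).
  move=> z; rewrite {1 2}sE2 index_cat mem_cat; case: ifP => [H _|_ /= H].
  - by rewrite index_mem.
  - by rewrite ltnNge leq_addr.
have HC1 : uniq (leaves L1 ++ leaves R1) by rewrite -sE1.
have HC2 : uniq (leaves L2 ++ leaves R2) by rewrite -sE2.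
have inR1 : forall z, z \in s -> (z \in leaves R1) = ~~ (index z s < q).
  move=> z Hz; rewrite -inL1 //; case: (boolP (z \in leaves L1)) => H.
  - by rewrite (negbTE (disj HC1 H)).
  - by move: Hz; rewrite sE1 mem_cat (negbTE H).
have inR2 : forall z, z \in s -> (z \in leaves R2) = ~~ (index z s < p).
  move=> z Hz; rewrite -inL2 //; case: (boolP (z \in leaves L2)) => H.
  - by rewrite (negbTE (disj HC2 H)).
  - by move: Hz; rewrite sE2 mem_cat (negbTE H).
have HP1 : forall pi u, sub_at T1 pi = Some u ->
    (forall z, z \in leaves u -> index z s < p) -> size (leaves u) < k.
  move=> pi u Hs Hz.
  set x := nth x0 s p.
  have xs : x \in s by rewrite mem_nth.
  have ix : index x s = p by rewrite index_uniq.
  have xu : x \notin leaves u by apply/negP => /Hz; rewrite ix ltnn.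
  rewrite -card_leafset; last exact: uniq_sub Hs.
  apply: (NP x); apply/and4P; split.
  - exact: leafset0.
  - rewrite properT; apply/eqP => E; move: xu.
    have : x \in leafset u by rewrite E inE.
    by rewrite inE => ->.
  - exact: G1 Hun Hs xs xu.
  - rewrite E2; apply: G2.
    + by rewrite -E2.
    + apply/subsetP => z; rewrite !inE => Hzu.
      by rewrite inL2 ?Hz //; exact: (sub_subset Hs).
    + exact: leafset0.
    + by rewrite inR2 // ix ltnn.
have HP2 : forall pi u, sub_at T2 pi = Some u ->
    (forall z, z \in leaves u -> q <= index z s) -> size (leaves u) < k.
  move=> pi u Hs Hz.
  set x := nth x0 s q.-1.
  have qN : q.-1 < N by rewrite (leq_ltn_trans _ pN) // (leq_trans (leq_pred q)).
  have xs : x \in s by rewrite mem_nth.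
  have ix : index x s = q.-1 by rewrite index_uniq.
  have xu : x \notin leaves u by apply/negP => /Hz; by rewrite ix leqNgt ltn_predL q0.
  rewrite -card_leafset; last exact: uniq_sub Hs.
  apply: (NP x); apply/and4P; split.
  - exact: leafset0.
  - rewrite properT; apply/eqP => E; move: xu.
    have : x \in leafset u by rewrite E inE.
    by rewrite inE => ->.
  - rewrite E1; apply: G2'.
    + by rewrite -E1.
    + apply/subsetP => z; rewrite !inE => Hzu.
      have zs : z \in s by rewrite /s Es; exact: (sub_subset Hs).
      by rewrite inR1 // -leqNgt Hz.
    + exact: leafset0.
    + by rewrite inL1 // ix ltn_predL q0.
  - by apply: G1 Hun2 Hs _ xu; rewrite -Es.
have qd : q < k.
  apply: (HP1 [:: false] L1); first by rewrite E1 /= sub_at0.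
  move=> z Hz; have zs : z \in s by rewrite sE1 mem_cat Hz.
  by move: Hz; rewrite inL1 // => H; exact: leq_trans H Hqp.
have pd : N - p < k.
  have : size (leaves R2) < k.
    apply: (HP2 [:: true] R2); first by rewrite E2 /= sub_at0.
    move=> z Hz; have zs : z \in s by rewrite sE2 mem_cat Hz orbT.
    by move: Hz; rewrite inR2 // -leqNgt => H; exact: leq_trans Hqp H.
  by rewrite /N sE2 size_cat addKn.
set d := k.-1.
have kd : k = d.+1 by rewrite /d prednK // ltnW.
have d0 : 0 < d by rewrite /d -ltnS -kd.
set b0 := q.-1.
have b0q : b0.+1 = q by rewrite /b0 prednK.
set K := (p - b0) %/ d + 1.
set pos := fun i => b0 + i * d.
have Hpos : forall i, i < K -> pos i <= p.
  move=> i Hi.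
  have Hi' : i <= (p - b0) %/ d by move: Hi; rewrite /K addn1 ltnS.
  have h1 : i * d <= (p - b0) %/ d * d by rewrite leq_mul2r Hi' orbT.
  have h2 := leq_divM (p - b0) d.
  have h3 : b0 <= p by rewrite /b0; exact: leq_trans (leq_pred _) Hqp.
  rewrite /pos; exact: ar_pos h1 h2 h3.
have posN : forall i, i < K -> pos i < N by move=> i Hi; exact: leq_ltn_trans (Hpos i Hi) pN.
set as_ := [seq nth x0 s (pos i) | i <- iota 0 K].
set A := [set z in as_].
have inA : forall z, z \in A -> exists2 i, i < K & z = nth x0 s (pos i).
  move=> z; rewrite inE => /mapP [i]; rewrite mem_iota add0n => /andP[_ Hi] ->; by exists i.
have idxA : forall z, z \in A -> b0 <= index z s <= p.
  move=> z /inA [i Hi ->]; rewrite index_uniq ?posN // Hpos // andbT /pos; exact: leq_addr.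
have sepA : forall a b, a \in A -> b \in A -> a != b ->
    (index a s + d <= index b s) || (index b s + d <= index a s).
  move=> a b /inA [i Hi ->] /inA [j Hj ->] Hab; rewrite !index_uniq ?posN //.
  case: (ltngtP i j) => Hij.
  - have : i.+1 * d <= j * d by rewrite leq_mul2r Hij orbT.
    rewrite mulSn /pos => H; apply/orP; left; exact: ar_sep H.
  - have : j.+1 * d <= i * d by rewrite leq_mul2r Hij orbT.
    rewrite mulSn /pos => H; apply/orP; right; exact: ar_sep H.
  - by rewrite Hij eqxx in Hab.
have uniqas : uniq as_.
  rewrite map_inj_in_uniq ?iota_uniq // => i j; rewrite !mem_iota !add0n => /andP[_ Hi] /andP[_ Hj] /eqP.
  rewrite nth_uniq ?posN // /pos eqn_add2l eqn_pmul2r //; exact/eqP.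
have cardA : #|A| = K by rewrite cardsE (card_uniqP uniqas) size_map size_iota.
have RG : rgood A T1.
  apply: rgood_of => pi l r Hs Hh; rewrite leqNgt; apply/negP => Hc.
  have Hul : uniq (leaves l).
    by have := uniq_sub Hun Hs; rewrite /= cat_uniq => /and3P [].
  case: (two Hul Hc) => a [b [Hab al bl aA bA]].
  have [pre [suf Es1]] := sub_leaves Hs.
  have Es1' : s = pre ++ (leaves l ++ leaves r) ++ suf by rewrite /s Es1.
  have E' : pre ++ leaves l ++ (leaves r ++ suf) = s by rewrite (catA (leaves l) (leaves r) suf) -Es1'.
  have Hu' : uniq (pre ++ leaves l ++ (leaves r ++ suf)) by rewrite E'.
  have Hsz : k <= size (leaves l).
    have := pos_mid Hu' al; have := pos_mid Hu' bl; rewrite E' => Hb Ha.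
    exact: ar_sz Ha Hb (sepA a b aA bA Hab) kd.
  have Hsl := sub_at_rconsb false Hs.
  have : ~~ all (fun z => index z s < p) (leaves l).
    apply/negP => /allP Hall; have := HP1 _ _ Hsl Hall; by rewrite ltnNge Hsz.
  case/allPn => z zl; rewrite -leqNgt => Hpz.
  case/hasP: Hh => w wr wA.
  have Hu'' : uniq (pre ++ (leaves l ++ leaves r) ++ suf) by rewrite -Es1'.
  have := before Hu'' zl wr; rewrite -Es1' => Hzw.
  exact: ar_r Hpz Hzw (idxA w wA).
have LG : lgood A T2.
  apply: lgood_of => pi l r Hs Hh; rewrite leqNgt; apply/negP => Hc.
  have Hur : uniq (leaves r).
    by have := uniq_sub Hun2 Hs; rewrite /= cat_uniq => /and3P [].
  case: (two Hur Hc) => a [b [Hab al bl aA bA]].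
  have [pre [suf Es1]] := sub_leaves Hs.
  have Es1' : s = pre ++ (leaves l ++ leaves r) ++ suf by rewrite /s Es Es1.
  have E' : (pre ++ leaves l) ++ leaves r ++ suf = s by rewrite -catA (catA (leaves l) (leaves r) suf) -Es1'.
  have Hu' : uniq ((pre ++ leaves l) ++ leaves r ++ suf) by rewrite E'.
  have Hsz : k <= size (leaves r).
    have := pos_mid Hu' al; have := pos_mid Hu' bl; rewrite E' => Hb Ha.
    exact: ar_sz Ha Hb (sepA a b aA bA Hab) kd.
  have Hsl := sub_at_rconsb true Hs.
  have : ~~ all (fun z => q <= index z s) (leaves r).
    apply/negP => /allP Hall; have := HP2 _ _ Hsl Hall; by rewrite ltnNge Hsz.
  case/allPn => z zl; rewrite -ltnNge => Hpz.
  case/hasP: Hh => w wl wA.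
  have Hu'' : uniq (pre ++ (leaves l ++ leaves r) ++ suf) by rewrite -Es1'.
  have := before Hu'' wl zl; rewrite -Es1' => Hzw.
  exact: ar_l Hpz Hzw (idxA w wA) b0q.
have HK : 0 < K by rewrite /K addn1.
have Hne : [seq z <- s | z \in A] != [::].
  rewrite -has_filter; apply/hasP; exists (nth x0 s (pos 0)); first exact: mem_nth (posN 0 HK).
  by rewrite inE; apply/mapP; exists 0 => //; rewrite mem_iota.
case E: [seq z <- s | z \in A] Hne => [|x xs] // _.
exists A, x, xs; split; [|split].
- rewrite cardA -/N.
  have h1 := divn_eq (p - b0) d; have h2 := ltn_pmod (p - b0) d0.
  rewrite /K !mulnDl mul1n.
  have h3 : b0 <= p by rewrite /b0; exact: leq_trans (leq_pred _) Hqp.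
  exact: ar_fin qd pd kd b0q h1 h2 h3 pN.
- by rewrite restrict_r // -/s E.
- by rewrite restrict_l // -Es -/s E.
Qed.
End Main.


Section Final.
Variable Z : finType.

Lemma pair_sym (T1 T2 : btree Z) x Y : pair_cond T1 T2 x Y = pair_cond T2 T1 x Y.
Proof. by rewrite /pair_cond; case: (prec _ _); case: (prec _ _); rewrite ?andbT ?andbF. Qed.

Lemma comb_main (T1 T2 : btree Z) (k : nat) : (2 <= #|Z|)%N -> ZTree T1 -> ZTree T2 ->
  leaves T1 = leaves T2 ->
  (exists x Y, pair_cond T1 T2 x Y /\ (k <= #|Y|)%N) \/
  (exists (A : {set Z}) S1 S2, (#|Z| < (#|A| + 2) * k.-1)%N /\ restrict A T1 = Some S1 /\
     restrict A T2 = Some S2 /\ caterpillar S1 /\ caterpillar S2 /\ identical S1 S2).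
Proof.
move=> HZ H1 H2 Es.
have Hun : uniq (leaves T1) by rewrite (perm_uniq H1) enum_uniq.
have Hun2 : uniq (leaves T2) by rewrite -Es.
have Hsz : size (leaves T1) = #|Z| by rewrite (perm_size H1) cardT.
case: (leqP k 1) => Hk.
- left; move: Hsz (Hun); case E: (leaves T1) => [|y [|x rest]] //= Hsz; try by rewrite -Hsz in HZ.
  case/and3P; rewrite inE negb_or => /andP [Hyx _] _ _.
  have yT1 : y \in leaves T1 by rewrite E mem_head.
  have xT1 : x \in leaves T1 by rewrite E !inE eqxx orbT.
  have [p1 Hp1] := leaf_path yT1.
  have [p2 Hp2] : exists p, sub_at T2 p = Some (Leaf y) by apply: leaf_path; rewrite -Es.
  have xy : x \notin leaves (Leaf y) by rewrite /= inE eq_sym.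
  exists x, (leafset (Leaf y)); split; last by rewrite card_leafset.
  apply/and4P; split.
  + exact: leafset0.
  + rewrite properT; apply/eqP => EY; move: xy.
    have : x \in leafset (Leaf y) by rewrite EY inE.
    by rewrite inE => ->.
  + exact: G1 Hun Hp1 xT1 xy.
  + by apply: G1 Hun2 Hp2 _ xy; rewrite -Es.
case: (boolP [exists x, exists Y, pair_cond T1 T2 x Y && (k <= #|Y|)]) => HP.
  left; case/existsP: HP => x /existsP [Y /andP [HY HkY]]; by exists x, Y.
right.
have NP : forall x Y, pair_cond T1 T2 x Y -> (#|Y| < k)%N.
  move=> x Y HY; rewrite ltnNge; apply/negP => HkY; move/negP: HP; apply.
  by apply/existsP; exists x; apply/existsP; exists Y; rewrite HY HkY.
case E1: T1 (Hsz) (Hun) => [a|L1 R1] Hsz' Hun'; first by rewrite -Hsz' in HZ.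
case E2: T2 (Hun2) => [a|L2 R2] Hun2'; first by move: Hsz; rewrite Es E2 => Hs; rewrite -Hs in HZ.
case: (leqP (size (leaves L1)) (size (leaves L2))) => Hqp.
- have [A [x [xs [Hc [R1' R2']]]]] := oriented Hk Hun Es NP E1 E2 Hqp.
  exists A, (rcomb x xs), (lcomb (Leaf x) xs); rewrite -E1 -E2 R1' R2'.
  split; first by rewrite -Hsz.
  split => //; split => //; split; [|split].
  + exact: rcomb_cat.
  + apply: (caterpillar_id (ident_rl x xs)); exact: rcomb_cat.
  + exact: ident_rl.
- have NP' : forall x Y, pair_cond T2 T1 x Y -> (#|Y| < k)%N by move=> x Y; rewrite pair_sym; exact: NP.
  have [A [x [xs [Hc [R1' R2']]]]] := oriented Hk Hun2 (esym Es) NP' E2 E1 (ltnW Hqp).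
  exists A, (lcomb (Leaf x) xs), (rcomb x xs); rewrite -E1 -E2 R1' R2'.
  split; first by rewrite -Hsz Es.
  split => //; split => //; split; [|split].
  + apply: (caterpillar_id (ident_rl x xs)); exact: rcomb_cat.
  + exact: rcomb_cat.
  + exact: ident_lr.
Qed.
End Final.

Section RealPart.
Local Open Scope R_scope.

Lemma fin_real (Nr C L t a D : R) : 0 < Nr -> 4 <= C -> 1 <= L -> 0 < t ->
  t * C <= Nr -> t * (2*L) <= Nr -> 0 <= D -> D <= t -> 0 <= a -> Nr < (a+2)*D -> L <= a.
Proof.
move=> N0 C4 L1 t0 tC tL D0 Dt a0 H.
have h1 : Nr < (a+2)*t by nra.
have h2 : C < a+2 by nra.
have h3 : 2*L < a+2 by nra.
lra.
Qed.

Lemma le_divM (t x c : R) : 0 < c -> t <= x / c -> t * c <= x.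
Proof.
move=> c0 H; have -> : x = x / c * c by field; lra.
by apply: Rmult_le_compat_r; lra.
Qed.

Lemma corollary1_aux (n : nat) (C : R) (Z : finType) (T1 T2 : btree Z) :
  (2 <= n)%N -> Rge C (INR 4) -> (2 <= #|Z|)%N ->
  ZTree T1 -> ZTree T2 -> leaves T1 = leaves T2 ->
  (exists (x : Z) (Y : {set Z}),
      pair_cond T1 T2 x Y /\ Rge (INR #|Y|) (Rdiv (INR #|Z|) C))
  \/ (exists (x : Z) (Y : {set Z}), good_pair n T1 T2 x Y)
  \/ (exists (A : {set Z}) (S1 S2 : btree Z),
      Rge (INR #|A|) (log2 (INR n)) /\
      restrict A T1 = Some S1 /\ restrict A T2 = Some S2 /\
      caterpillar S1 /\ caterpillar S2 /\ identical S1 S2).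
Proof.
move=> Hn HC HZ H1 H2 Es.
have C4 : 4 <= C by move: HC; rewrite /=; lra.
set Nr := INR #|Z|.
have N0 : 0 < Nr by apply: lt_0_INR; apply/leP; exact: leq_trans HZ.
have ln2 : 0 < ln 2 by rewrite -ln_1; apply: ln_increasing; lra.
have n2 : 2 <= INR n by have := le_INR _ _ (leP Hn); rewrite /=; lra.
set L := log2 (INR n).
have L1 : 1 <= L.
  have : ln 2 <= ln (INR n).
    case: (Rle_lt_or_eq_dec _ _ n2) => H; last by rewrite H; lra.
    by apply: Rlt_le; apply: ln_increasing; lra.
  move=> H; rewrite /L /log2 /Rdiv; apply: (Rmult_le_reg_r (ln 2)) => //.
  rewrite Rmult_assoc Rinv_l; lra.
have key : forall t, 0 < t -> t <= Nr / C -> t <= Nr / (2 * L) ->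
    (forall y, t < y -> Rge y (Nr / C) \/ Rge y (Nr / (2 * L))) ->
    (exists (x : Z) (Y : {set Z}),
      pair_cond T1 T2 x Y /\ Rge (INR #|Y|) (Rdiv (INR #|Z|) C))
    \/ (exists (x : Z) (Y : {set Z}), good_pair n T1 T2 x Y)
    \/ (exists (A : {set Z}) (S1 S2 : btree Z),
      Rge (INR #|A|) (log2 (INR n)) /\
      restrict A T1 = Some S1 /\ restrict A T2 = Some S2 /\
      caterpillar S1 /\ caterpillar S2 /\ identical S1 S2).
  move=> t t0 tC tL Hy.
  have [Hu1 Hu2] := archimed t.
  have up0 : (0 <= up t)%Z by apply: le_IZR; lra.
  set k := Z.to_nat (up t).
  have Ek : INR k = IZR (up t) by rewrite INR_IZR_INZ Znat.Z2Nat.id.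
  case: (comb_main k HZ H1 H2 Es) => [[x [Y [HY Hk]]]|[A [S1 [S2 [Hc Hrest]]]]].
  - have : INR k <= INR #|Y| by apply: le_INR; apply/leP.
    move=> HkY; case: (Hy (INR #|Y|)); first lra.
    + by move=> H; left; exists x, Y.
    + by move=> H; right; left; exists x, Y.
  - right; right; exists A, S1, S2; split => //.
    have Hc' := lt_INR _ _ (leP Hc).
    rewrite mult_INR plus_INR in Hc'.
    case Ek1 : k Hc' Ek => [|k'] Hc' Ek'.
      by move: Hc; rewrite Ek1 muln0.
    have Dt : INR k' <= t by rewrite S_INR in Ek'; lra.
    have Cp : 0 < C by lra.
    have Lp : 0 < 2 * L by lra.
    have a0 := pos_INR #|A|.
    have D0 := pos_INR k'.
    have h := fin_real N0 C4 L1 t0 (le_divM Cp tC) (le_divM Lp tL) D0 Dt a0.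
    apply: Rle_ge; apply: h; move: Hc'; rewrite /Nr /=; lra.
case: (Rle_dec (Nr / C) (Nr / (2 * L))) => H.
- apply: (key (Nr / C)) => //.
  + apply: Rdiv_lt_0_compat; lra.
  + by apply: Rle_refl.
  + by move=> y Hy; left; lra.
- apply: (key (Nr / (2 * L))) => //.
  + apply: Rdiv_lt_0_compat; lra.
  + lra.
  + by apply: Rle_refl.
  + by move=> y Hy; right; lra.
Qed.

End RealPart.

Theorem corollary1 (n : nat) (C : R) (Z : finType) (T1 T2 : btree Z) :
  (2 <= n)%N -> Rge C (INR 4) -> (2 <= #|Z|)%N ->
  ZTree T1 -> ZTree T2 -> leaves T1 = leaves T2 ->
  (exists (x : Z) (Y : {set Z}),
      pair_cond T1 T2 x Y /\ Rge (INR #|Y|) (Rdiv (INR #|Z|) C))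
  \/ (exists (x : Z) (Y : {set Z}), good_pair n T1 T2 x Y)
  \/ (exists (A : {set Z}) (S1 S2 : btree Z),
      Rge (INR #|A|) (log2 (INR n)) /\
      restrict A T1 = Some S1 /\ restrict A T2 = Some S2 /\
      caterpillar S1 /\ caterpillar S2 /\ identical S1 S2).
Proof. exact: corollary1_aux. Qed.
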